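(* Let $F:\mathcal{P}(V,A)\to 2^A\setminus\{\emptyset\}$ be a committee selection rule satisfying SPO and SPP. Let $P$ be a profile, $i$ a voter, $W=F(P)$, $t=\mathrm{best}(P_i,W)$, $b=\mathrm{worst}(P_i,W)$, and suppose $t\neq b$. Let $s\in A$ with $s\neq t,b$ and let $W'=F(P^{i\uparrow s})$. Then (1) $\mathrm{best}(P_i^{\uparrow s},W')\in\{t,s\}$, and (2) $\mathrm{worst}(P_i^{\uparrow s},W')\in\{b,s\}$.
   Context: $V$ is a finite nonempty set of voters, $A$ a finite set of alternatives; a profile $P$ assigns to each voter $i$ a linear order $P_i$ on $A$ (strict part $\succ_i$, weak part $\succeq_i$); $P_i'P_{-i}$ replaces voter $i$'s order by $P_i'$. A committee selection rule maps each profile to a nonempty subset of $A$. $\mathrm{best}(P_i,W)$, $\mathrm{worst}(P_i,W)$ are the $P_i$-best and $P_i$-worst elements of nonempty $W\subseteq A$. SPO: for all $P$, $i$, $P_i'$, $\mathrm{best}(P_i,F(P))\succeq_i\mathrm{best}(P_i,F(P_i'P_{-i}))$; SPP: same with $\mathrm{worst}$. $P_i^{\uparrow s}$ is the linear order obtained from $P_i$ by swapping $s$ with the alternative directly above it, and $P^{i\uparrow s}$ is the profile obtained from $P$ by replacing $P_i$ with $P_i^{\uparrow s}$. *)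

(* Defs.v *)
From mathcomp Require Import all_boot.
Set Implicit Arguments. Unset Strict Implicit. Unset Printing Implicit Defensive.

(* A linear order on the finite set A of alternatives is represented by the
   duplicate-free sequence of all alternatives, listed from best (head,
   index 0) to worst (last). *)
Definition linord (A : finType) := {s : seq A | perm_eq s (enum A)}.

Definition lo_seq (A : finType) (o : linord A) : seq A := sval o.

Definition succ (A : finType) (o : linord A) (x y : A) : bool :=
  index x (lo_seq o) < index y (lo_seq o).
Definition succeq (A : finType) (o : linord A) (x y : A) : bool :=
  index x (lo_seq o) <= index y (lo_seq o).

Definition profile (V A : finType) := V -> linord A.

Definition replace (V A : finType) (P : profile V A) (i : V) (o : linord A)
  : profile V A := fun j => if j == i then o else P j.

Definition best (A : finType) (o : linord A) (W : {set A}) : option A :=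
  ohead [seq x <- lo_seq o | x \in W].
Definition worst (A : finType) (o : linord A) (W : {set A}) : option A :=
  ohead (rev [seq x <- lo_seq o | x \in W]).

Definition SPO (V A : finType) (F : profile V A -> {set A}) : Prop :=
  forall P i o x y, best (P i) (F P) = Some x ->
    best (P i) (F (replace P i o)) = Some y -> succeq (P i) x y.
Definition SPP (V A : finType) (F : profile V A -> {set A}) : Prop :=
  forall P i o x y, worst (P i) (F P) = Some x ->
    worst (P i) (F (replace P i o)) = Some y -> succeq (P i) x y.

(* move x one position up in s (swap it with the item directly above it);
   s is unchanged if x is on top (or absent) *)
Definition swap_up (T : eqType) (s : seq T) (x : T) : seq T :=
  let k := index x s in
  if (0 < k < size s)%N then take k.-1 s ++ x :: nth x s k.-1 :: drop k.+1 s
  else s.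

Lemma perm_swap_up (T : eqType) (s : seq T) (x : T) : perm_eq (swap_up s x) s.
Proof.
rewrite /swap_up; case: ifP => // /andP [k0 ks].
set k := index x s.
have Hx : nth x s k = x by rewrite nth_index // -index_mem.
rewrite -{4}(cat_take_drop k.-1 s).
rewrite perm_cat2l.
have -> : drop k.-1 s = nth x s k.-1 :: x :: drop k.+1 s.
  rewrite (drop_nth x); last by rewrite (leq_ltn_trans (leq_pred _)).
  rewrite prednK // (drop_nth x) // Hx //.
by rewrite (perm_catCA [:: x] [:: nth x s k.-1]).
Qed.

Definition up (A : finType) (o : linord A) (x : A) : linord A :=
  exist _ (swap_up (lo_seq o) x) (perm_trans (perm_swap_up _ _) (svalP o)).

Definition prof_up (V A : finType) (P : profile V A) (i : V) (x : A)
  : profile V A := replace P i (up (P i) x).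

(* Main.v *)
Require Import Defs.
Set Implicit Arguments. Unset Strict Implicit.
From mathcomp Require Import all_boot zify.
From Stdlib Require Import FunctionalExtensionality.

Definition g k v := if v == k.-1 then k else v.
Lemma arith1 k a a' m : 0<k -> a<=m -> m<=a' -> a' != a -> a' != k -> a != k -> g k a' <= g k a -> False.
Proof. rewrite /g; case: ifP => /eqP ?; case: ifP => /eqP ?; lia. Qed.
Lemma arith2 k b b' iz iz' iy iy' : 0<k -> b != k -> b' != k -> b' != b -> b <= iz -> iz' <= g k b' -> g k b' <= iy' -> iy <= b -> ((iz = k /\ iz' = k.-1) \/ (iz != k /\ iz' = g k iz)) -> ((iy = k /\ iy' = k.-1) \/ (iy != k /\ iy' = g k iy)) -> False.
Proof.
rewrite /g => h1 h2 h3 h4 h5 h6 h7 h8 [[h9 h10]|[h9 h10]] [[h11 h12]|[h11 h12]]; move: h6 h7 h10 h12;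
 repeat case: ifP => /eqP ?; lia.
Qed.

Lemma pred_neq n : 0 < n -> n <> n.-1. Proof. lia. Qed.
Section H.
Variable A : finType.
Implicit Types (o : linord A) (W : {set A}).

Lemma lo_uniq o : uniq (lo_seq o).
Proof. by rewrite (perm_uniq (svalP o)) enum_uniq. Qed.

Lemma lo_mem o x : x \in lo_seq o.
Proof. by rewrite (perm_mem (svalP o)) mem_enum. Qed.

Lemma ix_inj o x y : index x (lo_seq o) = index y (lo_seq o) -> x = y.
Proof.
move=> E; by rewrite -(nth_index x (lo_mem o x)) E nth_index // lo_mem.
Qed.

Lemma best_head (p : pred A) (s : seq A) x w :
  ohead (filter p s) = Some x -> w \in s -> p w -> x \in s /\ p x /\ index x s <= index w s.
Proof.
elim: s => //= a s IH; case: ifP => pa /=.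
  by case=> <- _ _; rewrite /= inE eqxx pa.
move=> H; rewrite inE => /orP [/eqP -> |ws] pw; first by rewrite pw in pa.
have [xs [px le]] := IH H ws pw.
have xa : (a == x) = false by apply/negP => /eqP E; rewrite E px in pa.
have wa : (a == w) = false by apply/negP => /eqP E; rewrite E pw in pa.
by rewrite inE xs orbT xa wa.
Qed.

Lemma index_rev (s : seq A) x : uniq s -> x \in s ->
  index x (rev s) = size s - (index x s).+1.
Proof.
move=> us xs.
have lt : index x s < size s by rewrite index_mem.
have lt2 : size s - (index x s).+1 < size (rev s) by rewrite size_rev; lia.
rewrite -{1}(index_uniq x lt2 _); last by rewrite rev_uniq.
rewrite size_rev in lt2; rewrite nth_rev //.
by rewrite (_ : size s - (size s - (index x s).+1).+1 = index x s) ?nth_index //; lia.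
Qed.

Lemma worst_last (p : pred A) (s : seq A) x w : uniq s ->
  ohead (rev (filter p s)) = Some x -> w \in s -> p w -> x \in s /\ p x /\ index w s <= index x s.
Proof.
move=> us; rewrite -filter_rev => H ws pw.
have wr : w \in rev s by rewrite mem_rev.
have [xs [px le]] := best_head H wr pw.
rewrite mem_rev in xs; rewrite !index_rev // in le.
have h1 : index w s < size s by rewrite index_mem.
have h2 : index x s < size s by rewrite index_mem.
split=> //; split=> //; lia.
Qed.

Lemma ohead_mem (s : seq A) x : ohead s = Some x -> x \in s.
Proof. by case: s => //= y r [<-]; rewrite inE eqxx. Qed.

Lemma best_spec o W x : best o W = Some x -> x \in W /\ forall w, w \in W -> index x (lo_seq o) <= index w (lo_seq o).
Proof.
move=> H; have xW : x \in W by move: (ohead_mem H); rewrite mem_filter => /andP[].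
split=> // w wW; by have [_ [_ ]] := @best_head (fun y => y \in W) _ x w H (lo_mem o w) wW.
Qed.

Lemma worst_spec o W x : worst o W = Some x -> x \in W /\ forall w, w \in W -> index w (lo_seq o) <= index x (lo_seq o).
Proof.
move=> H; have xW : x \in W by move: (ohead_mem H); rewrite mem_rev mem_filter => /andP[].
split=> // w wW; by have [_ [_ ]] := @worst_last (fun y => y \in W) _ x w (lo_uniq o) H (lo_mem o w) wW.
Qed.

Lemma best_ex o W : W != set0 -> exists x, best o W = Some x.
Proof.
case/set0Pn => w wW; rewrite /best.
have : w \in [seq x <- lo_seq o | x \in W] by rewrite mem_filter wW lo_mem.
by case: [seq _ <- _ | _] => //= y r _; exists y.
Qed.

Lemma worst_ex o W : W != set0 -> exists x, worst o W = Some x.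
Proof.
case/set0Pn => w wW; rewrite /worst.
have : w \in rev [seq x <- lo_seq o | x \in W] by rewrite mem_rev mem_filter wW lo_mem.
by case: (rev _) => //= y r _; exists y.
Qed.

Lemma nth_idx_eq (L : seq A) (x : A) j : uniq L -> j < size L -> nth x L j = x -> index x L = j.
Proof. by move=> uL jl E; rewrite -{1}E index_uniq. Qed.

Lemma up_ix o s : (forall x, index x (lo_seq (up o s)) = index x (lo_seq o)) \/
  (0 < index s (lo_seq o) /\ forall x, index x (lo_seq (up o s)) =
     if x == s then (index s (lo_seq o)).-1
     else if index x (lo_seq o) == (index s (lo_seq o)).-1 then index s (lo_seq o)
     else index x (lo_seq o)).
Proof.
have uL' := lo_uniq (up o s).
have sz : size (lo_seq (up o s)) = size (lo_seq o) by apply: perm_size; apply: perm_swap_up.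
move: uL' sz; rewrite /up /lo_seq /=; set L := sval o.
have uL : uniq L := lo_uniq o.
have mL : forall x, x \in L := lo_mem o. clearbody L.
rewrite /swap_up; case: ifP => [/andP[k0 ks] | _] uL' sz; [right|by left].
split=> // x; move: k0 ks uL' sz; move Ek: (index s L) => k k0 ks uL' sz.
have {}ks : k < size L := ks.
have ix : index x L < size L by rewrite index_mem.
have tk : size (take k.-1 L) = k.-1 by rewrite size_takel //; apply: leq_trans (leq_pred _) (ltnW ks).
case: eqP => [-> | /eqP xs].
  apply: nth_idx_eq => //; first by rewrite sz; clear -k0 ks; lia.
  by rewrite nth_cat tk ltnn subnn.
have xk : index x L != k.
  apply/negP => /eqP E; move/eqP: xs; apply.
  by rewrite -(nth_index x (mL x)) E -Ek nth_index.
case: eqP => [E | /eqP xk1].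
  apply: nth_idx_eq => //; first by rewrite sz.
  rewrite nth_cat tk ltnNge leq_pred /= (_ : k - k.-1 = 1) /=; last by lia.
  by rewrite -E (set_nth_default x) // nth_index.
apply: nth_idx_eq => //; first by rewrite sz.
rewrite nth_cat tk.
case: ltnP => [lt | ge].
  by rewrite nth_take // nth_index.
rewrite (_ : index x L - k.-1 = (index x L - k.+1).+2) /=; last by lia.
by rewrite nth_drop (_ : k.+1 + _ = index x L) ?nth_index //; lia.
Qed.

Lemma ixne o u v : u != v -> index u (lo_seq o) != index v (lo_seq o).
Proof. by move=> ne; apply/eqP => /ix_inj E; rewrite E eqxx in ne. Qed.
Lemma up_ix2 o s : (forall x, index x (lo_seq (up o s)) = index x (lo_seq o)) \/
  (0 < index s (lo_seq o) /\ index s (lo_seq (up o s)) = (index s (lo_seq o)).-1 /\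
   forall x, x != s -> index x (lo_seq (up o s)) = g (index s (lo_seq o)) (index x (lo_seq o))).
Proof.
case: (up_ix o s) => [E|[k0 E]]; [by left | right].
split=> //; split; first by rewrite E eqxx.
by move=> x xs; rewrite E (negbTE xs).
Qed.

Lemma up_cases o s x : (index x (lo_seq o) = index s (lo_seq o) /\ index x (lo_seq (up o s)) = (index s (lo_seq o)).-1)
  \/ (index x (lo_seq o) != index s (lo_seq o) /\ index x (lo_seq (up o s)) = g (index s (lo_seq o)) (index x (lo_seq o))) \/
  (forall x, index x (lo_seq (up o s)) = index x (lo_seq o)).
Proof.
case: (up_ix2 o s) => [E|[k0 [E1 E2]]]; [by right; right|].
case: (eqVneq x s) => [->|xs]; [by left | right; left].
by split; [apply: ixne | apply: E2].
Qed.
End H.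
Theorem lemma7 (V A : finType) (F : profile V A -> {set A})
  (HF : forall P, F P != set0) (Hspo : SPO F) (Hspp : SPP F)
  (P : profile V A) (i : V) (t b s : A) :
  best (P i) (F P) = Some t -> worst (P i) (F P) = Some b -> t != b ->
  s != t -> s != b ->
  (exists2 t', best (up (P i) s) (F (prof_up P i s)) = Some t' & t' \in [:: t; s])
  /\
  (exists2 b', worst (up (P i) s) (F (prof_up P i s)) = Some b' & b' \in [:: b; s]).
Proof.
move=> Hb Hw Htb Hst Hsb.
have HP'i : prof_up P i s i = up (P i) s by rewrite /prof_up /replace eqxx.
have HPP : replace (prof_up P i s) i (P i) = P.
  apply: functional_extensionality => j; rewrite /replace /prof_up /replace.
  by case: eqP => // ->.
have [t' Ht'] := best_ex (up (P i) s) (HF (prof_up P i s)).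
have [b' Hb'] := worst_ex (up (P i) s) (HF (prof_up P i s)).
have [x Hx] := best_ex (up (P i) s) (HF P).
have [y Hy] := worst_ex (up (P i) s) (HF P).
have [t'' Ht''] := best_ex (P i) (HF (prof_up P i s)).
have [z Hz] := worst_ex (P i) (HF (prof_up P i s)).
have S1 := Hspo (prof_up P i s) i (P i) t' x. rewrite HPP HP'i in S1. have {}S1 := S1 Ht' Hx.
have S2 := Hspo P i (up (P i) s) t t'' Hb Ht''.
have P1 := Hspp (prof_up P i s) i (P i) b' y. rewrite HPP HP'i in P1. have {}P1 := P1 Hb' Hy.
have P2 := Hspp P i (up (P i) s) b z Hw Hz.
rewrite /succeq in S1 S2 P1 P2.
have [tW _] := best_spec Hb.
have [bW _] := worst_spec Hw.
have [t'W _] := best_spec Ht'.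
have [_ /(_ _ t'W) F1] := best_spec Ht''.
have [_ /(_ _ tW) F2] := best_spec Hx.
have [yW _] := worst_spec Hy.
have [_ /(_ _ yW) F3] := worst_spec Hw.
have [zW _] := worst_spec Hz.
have [_ /(_ _ zW) F4] := worst_spec Hb'.
have ts : t != s by rewrite eq_sym.
have bs : b != s by rewrite eq_sym.
split.
  exists t' => //; rewrite !inE.
  case/boolP: (t' == t) => //= n1.
  case/boolP: (t' == s) => //= n2.
  exfalso.
  have d1 := ixne (P i) n1. have d2 := ixne (P i) n2. have d3 := ixne (P i) ts.
  case: (up_ix2 (P i) s) => [E | [k0 [E1 E2]]].
    move: S1 F2; rewrite !E => S1 F2.
    by move/eqP: d1; apply; apply/eqP; rewrite eqn_leq (leq_trans S2 F1) (leq_trans S1 F2).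
  move: S1 F2; rewrite (E2 t' n2) (E2 t ts) => S1 F2.
  exact: (arith1 k0 (leq_trans S2 F1) _ d1 d2 d3 (leq_trans S1 F2)).
exists b' => //; rewrite !inE.
case/boolP: (b' == b) => //= n1.
case/boolP: (b' == s) => //= n2.
exfalso.
have d1 := ixne (P i) n1. have d2 := ixne (P i) n2. have d3 := ixne (P i) bs.
case: (up_ix2 (P i) s) => [E | [k0 [E1 E2]]].
  move: P1 F4; rewrite !E => P1 F4.
  move/eqP: d1; apply; apply/eqP; rewrite eqn_leq (leq_trans P1 F3) /=.
  exact: (leq_trans P2 F4).
move: P1 F4; rewrite (E2 b' n2) => P1 F4.
have Cz := up_cases (P i) s z.
have Cy := up_cases (P i) s y.
case: Cz => [Cz|[Cz|E]]; last by move: E1; rewrite E; apply: pred_neq.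
all: case: Cy => [Cy|[Cy|E]]; last (by move: E1; rewrite E; apply: pred_neq).
all: apply: (arith2 k0 d3 d2 d1 P2 F4 P1 F3) => //; by [left | right].
Qed.
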